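(* A pseudovariety of semigroupoids $\mathsf V$ is equidivisible if and only if $\overline{\Omega}_A\mathsf V$ is equidivisible for every finite-vertex graph $A$.
   Context: A semigroupoid is a graph (vertices, edges, source/range maps $\alpha,\omega$) with associative partial multiplication $st$ defined iff $\alpha(s)=\omega(t)$; $S^I$ is $S$ with a local identity adjoined at each vertex. $S$ is equidivisible if whenever $uv=xy$ for edges $u,v,x,y$, there is $t\in E(S^I)$ with either ($ut=x$ and $v=ty$) or ($xt=u$ and $y=tv$). A pseudovariety of semigroupoids (class of finite semigroupoids closed under divisors, finite direct products, finite coproducts) $\mathsf V$ is equidivisible if the free pro-$\mathsf V$ semigroupoid $\overline{\Omega}_A\mathsf V$ is equidivisible for every finite graph $A$ (finitely many vertices and edges). Finite-vertex graphs may have infinitely many edges. *)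

(* Defs.v *)
From Stdlib Require Import List ProofIrrelevance.


Record graph := Graph {
  gV : Type;
  gE : Type;
  galpha : gE -> gV;
  gomega : gE -> gV
}.

Definition finite_type (T : Type) : Prop := exists l : list T, forall x, In x l.

Definition finite_graph (A : graph) : Prop := finite_type (gV A) /\ finite_type (gE A).
Definition finite_vertex_graph (A : graph) : Prop := finite_type (gV A).

(* The product [st] is defined iff alpha s = omega t; we make it a
   dependent function taking a proof of that equation. *)
Record sgd := Sgd {
  sV : Type;
  sE : Type;
  salpha : sE -> sV;
  somega : sE -> sV;
  smul : forall s t : sE, salpha s = somega t -> sE;
  smul_alpha : forall s t h, salpha (smul s t h) = salpha t;
  smul_omega : forall s t h, somega (smul s t h) = somega s;
  smul_assoc : forall s t u h1 h2 h3 h4,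
      smul (smul s t h1) u h2 = smul s (smul t u h3) h4
}.

Definition finite_sgd (S : sgd) : Prop := finite_type (sV S) /\ finite_type (sE S).

Record smor (S T : sgd) := Smor {
  mv : sV S -> sV T;
  me : sE S -> sE T;
  me_alpha : forall s, salpha T (me s) = mv (salpha S s);
  me_omega : forall s, somega T (me s) = mv (somega S s);
  me_mul : forall s t (h : salpha S s = somega S t)
                 (h' : salpha T (me s) = somega T (me t)),
      me (smul S s t h) = smul T (me s) (me t) h'
}.
Arguments mv {S T} _ _.
Arguments me {S T} _ _.
Arguments me_alpha {S T} _ _.
Arguments me_omega {S T} _ _.
Arguments me_mul {S T} _ _ _ _ _.

Record gmor (A : graph) (S : sgd) := Gmor {
  fv : gV A -> sV S;
  fe : gE A -> sE S;
  fe_alpha : forall a, salpha S (fe a) = fv (galpha A a);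
  fe_omega : forall a, somega S (fe a) = fv (gomega A a)
}.
Arguments fv {A S} _ _.
Arguments fe {A S} _ _.
Arguments fe_alpha {A S} _ _.
Arguments fe_omega {A S} _ _.

Definition gcomp {A : graph} {S T : sgd} (psi : smor S T) (phi : gmor A S) : gmor A T.
Proof.
  refine (Gmor A T (fun a => mv psi (fv phi a)) (fun a => me psi (fe phi a)) _ _).
  - intro a. rewrite me_alpha, fe_alpha. reflexivity.
  - intro a. rewrite me_omega, fe_omega. reflexivity.
Defined.

Definition bij {X Y : Type} (f : X -> Y) : Prop :=
  exists g : Y -> X, (forall x, g (f x) = x) /\ (forall y, f (g y) = y).

Definition rel_morphism {S T : sgd} (rv : sV S -> sV T -> Prop)
    (re : sE S -> sE T -> Prop) : Prop :=
  (forall v, exists v', rv v v') /\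
  (forall s u' w', rv (salpha S s) u' -> rv (somega S s) w' ->
      exists t, re s t /\ salpha T t = u' /\ somega T t = w') /\
  (forall s t, re s t -> rv (salpha S s) (salpha T t) /\ rv (somega S s) (somega T t)) /\
  (forall s s' t t' h h', re s t -> re s' t' -> re (smul S s s' h) (smul T t t' h')).

Definition division {S T : sgd} (rv : sV S -> sV T -> Prop)
    (re : sE S -> sE T -> Prop) : Prop :=
  rel_morphism rv re /\
  (forall v v' w, rv v w -> rv v' w -> v = v') /\
  (forall s s' t, salpha S s = salpha S s' -> somega S s = somega S s' ->
      re s t -> re s' t -> s = s').

Definition divides (S T : sgd) : Prop := exists rv re, division (S:=S) (T:=T) rv re.

Definition is_product (P S T : sgd) : Prop :=
  exists (p1 : smor P S) (p2 : smor P T),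
    bij (fun v => (mv p1 v, mv p2 v)) /\ bij (fun e => (me p1 e, me p2 e)).

Definition is_coproduct (P S T : sgd) : Prop :=
  exists (i1 : smor S P) (i2 : smor T P),
    bij (fun v : sV S + sV T => match v with inl x => mv i1 x | inr y => mv i2 y end) /\
    bij (fun e : sE S + sE T => match e with inl x => me i1 x | inr y => me i2 y end).

(* empty direct product: the trivial semigroupoid (one vertex, one edge) *)
Definition is_trivial (P : sgd) : Prop :=
  (exists v : sV P, forall w, w = v) /\ (exists e : sE P, forall f, f = e).

(* empty coproduct: the empty semigroupoid *)
Definition is_empty_sgd (P : sgd) : Prop := (sV P -> False) /\ (sE P -> False).

Definition pseudovariety (V : sgd -> Prop) : Prop :=
  (forall S, V S -> finite_sgd S) /\
  (forall S T, V T -> finite_sgd S -> divides S T -> V S) /\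
  (forall P, is_trivial P -> V P) /\
  (forall P S T, V S -> V T -> is_product P S T -> V P) /\
  (forall P, is_empty_sgd P -> V P) /\
  (forall P S T, V S -> V T -> is_coproduct P S T -> V P).

(* Elements of E(S^I): edges of S, or local identities 1_w at vertices w. *)
Section Equidiv.
Variables (Vt Et : Type) (alpha omega : Et -> Vt)
          (mul : forall s t : Et, alpha s = omega t -> Et).

Definition prodI (a b c : Et + Vt) : Prop :=
  match a, b with
  | inl s, inl t => exists h : alpha s = omega t, c = inl (mul s t h)
  | inl s, inr w => alpha s = w /\ c = inl s
  | inr w, inl t => omega t = w /\ c = inl t
  | inr w, inr w' => w = w' /\ c = inr w
  end.

Definition equidivisible_str : Prop :=
  forall (u v x y : Et) (h1 : alpha u = omega v) (h2 : alpha x = omega y),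
    mul u v h1 = mul x y h2 ->
    exists t : Et + Vt,
      (prodI (inl u) t (inl x) /\ prodI t (inl y) (inl v)) \/
      (prodI (inl x) t (inl u) /\ prodI t (inl v) (inl y)).
End Equidiv.

Definition sgd_equidivisible (S : sgd) : Prop :=
  equidivisible_str (sV S) (sE S) (salpha S) (somega S) (smul S).

(* Realised as the projective limit of all finite semigroupoids S in V
   equipped with a graph morphism A -> S: an element is a family indexed by
   such pairs (S, phi), natural with respect to all semigroupoid morphisms
   S -> T commuting with the maps from A. *)
Section FreeProV.
Variables (V : sgd -> Prop) (A : graph).

Record OmV := MkOmV {
  ov : forall {S : sgd}, V S -> gmor A S -> sV S;
  ov_nat : forall (S : sgd) (HS : V S) (T : sgd) (HT : V T) (phi : gmor A S) (psi : smor S T),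
      mv psi (ov HS phi) = ov HT (gcomp psi phi)
}.

Record OmE := MkOmE {
  oe : forall {S : sgd}, V S -> gmor A S -> sE S;
  oe_nat : forall (S : sgd) (HS : V S) (T : sgd) (HT : V T) (phi : gmor A S) (psi : smor S T),
      me psi (oe HS phi) = oe HT (gcomp psi phi)
}.

Definition Oalpha (x : OmE) : OmV.
Proof.
  refine (MkOmV (fun S HS phi => salpha S (oe x HS phi)) _).
  intros S HS T HT phi psi. rewrite <- (me_alpha psi), (oe_nat x S HS T HT). reflexivity.
Defined.

Definition Oomega (x : OmE) : OmV.
Proof.
  refine (MkOmV (fun S HS phi => somega S (oe x HS phi)) _).
  intros S HS T HT phi psi. rewrite <- (me_omega psi), (oe_nat x S HS T HT). reflexivity.
Defined.

Lemma smul_congr (S : sgd) s s' t t' h h' :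
  s = s' -> t = t' -> smul S s t h = smul S s' t' h'.
Proof. intros -> ->. f_equal. apply proof_irrelevance. Qed.

Definition Omul (x y : OmE) (h : Oalpha x = Oomega y) : OmE.
Proof.
  refine (MkOmE (fun S HS phi =>
            smul S (oe x HS phi) (oe y HS phi)
                 (f_equal (fun o => ov o HS phi) h)) _).
  intros S HS T HT phi psi.
  assert (h' : salpha T (me psi (oe x HS phi)) = somega T (me psi (oe y HS phi))).
  { rewrite me_alpha, me_omega. exact (f_equal (mv psi) (f_equal (fun o => ov o HS phi) h)). }
  rewrite (me_mul psi _ _ _ h').
  apply smul_congr; apply oe_nat.
Defined.

Definition free_proV_equidivisible : Prop :=
  equidivisible_str OmV OmE Oalpha Oomega Omul.
End FreeProV.

Definition pv_equidivisible (V : sgd -> Prop) : Prop :=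
  forall A : graph, finite_graph A -> free_proV_equidivisible V A.

(* Main.v *)
Require Import Defs.
From Stdlib Require Import List ProofIrrelevance ClassicalEpsilon Classical FunctionalExtensionality.

Lemma smul_pi (S : sgd) s t h h' : smul S s t h = smul S s t h'.
Proof. f_equal. apply proof_irrelevance. Qed.

Lemma gmor_ext (A : graph) (S : sgd) (g1 g2 : gmor A S) :
  (forall a, fv g1 a = fv g2 a) -> (forall a, fe g1 a = fe g2 a) -> g1 = g2.
Proof.
  destruct g1 as [v1 e1 a1 o1], g2 as [v2 e2 a2 o2]; simpl; intros Hv He.
  assert (v1 = v2) by (apply functional_extensionality; auto).
  assert (e1 = e2) by (apply functional_extensionality; auto).
  subst. f_equal; apply proof_irrelevance.
Qed.

Lemma OmE_ext (V : sgd -> Prop) (A : graph) (x y : OmE V A) :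
  (forall S (HS : V S) phi, oe V A x HS phi = oe V A y HS phi) -> x = y.
Proof.
  destruct x as [f1 n1], y as [f2 n2]; simpl; intros H.
  assert (f1 = f2).
  { apply functional_extensionality_dep; intro S.
    apply functional_extensionality_dep; intro HS.
    apply functional_extensionality; intro phi. apply H. }
  subst. f_equal; apply proof_irrelevance.
Qed.

Lemma OmV_ext (V : sgd -> Prop) (A : graph) (x y : OmV V A) :
  (forall S (HS : V S) phi, ov V A x HS phi = ov V A y HS phi) -> x = y.
Proof.
  destruct x as [f1 n1], y as [f2 n2]; simpl; intros H.
  assert (f1 = f2).
  { apply functional_extensionality_dep; intro S.
    apply functional_extensionality_dep; intro HS.
    apply functional_extensionality; intro phi. apply H. }
  subst. f_equal; apply proof_irrelevance.
Qed.

Lemma sig_ext {X : Type} (P : X -> Prop) (a b : {x | P x}) :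
  proj1_sig a = proj1_sig b -> a = b.
Proof.
  destruct a, b; simpl; intros; subst. f_equal; apply proof_irrelevance.
Qed.

Definition scomp {R S T : sgd} (psi : smor S T) (rho : smor R S) : smor R T.
Proof.
  refine (Smor R T (fun v => mv psi (mv rho v)) (fun e => me psi (me rho e)) _ _ _).
  - intro s. rewrite me_alpha, me_alpha. reflexivity.
  - intro s. rewrite me_omega, me_omega. reflexivity.
  - intros s t h h'.
    assert (h2 : salpha S (me rho s) = somega S (me rho t)).
    { rewrite me_alpha, me_omega, h. reflexivity. }
    rewrite (me_mul rho s t h h2). apply me_mul.
Defined.

Definition sid (S : sgd) : smor S S.
Proof.
  refine (Smor S S (fun v => v) (fun e => e) (fun _ => eq_refl) (fun _ => eq_refl) _).
  intros. apply smul_pi.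
Defined.

Definition gr (S : sgd) : graph := Graph (sV S) (sE S) (salpha S) (somega S).

Definition idg (S : sgd) : gmor (gr S) S :=
  Gmor (gr S) S (fun v => v) (fun e => e) (fun _ => eq_refl) (fun _ => eq_refl).

Definition triv : sgd.
Proof.
  refine (Sgd unit unit (fun _ => tt) (fun _ => tt) (fun _ _ _ => tt) _ _ _);
    intros; reflexivity.
Defined.

Definition psgd (S T : sgd) : sgd.
Proof.
  refine (Sgd (sV S * sV T) (sE S * sE T)
    (fun e => (salpha S (fst e), salpha T (snd e)))
    (fun e => (somega S (fst e), somega T (snd e)))
    (fun s t h => (smul S (fst s) (fst t) (f_equal fst h), smul T (snd s) (snd t) (f_equal snd h)))
    _ _ _).
  - intros; simpl. rewrite !smul_alpha. reflexivity.
  - intros; simpl. rewrite !smul_omega. reflexivity.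
  - intros; simpl. f_equal; apply smul_assoc.
Defined.

Definition ppr1 (S T : sgd) : smor (psgd S T) S.
Proof.
  refine (Smor (psgd S T) S fst fst (fun _ => eq_refl) (fun _ => eq_refl) _).
  intros. apply smul_pi.
Defined.

Definition ppr2 (S T : sgd) : smor (psgd S T) T.
Proof.
  refine (Smor (psgd S T) T snd snd (fun _ => eq_refl) (fun _ => eq_refl) _).
  intros. apply smul_pi.
Defined.

Lemma psgd_product (S T : sgd) : is_product (psgd S T) S T.
Proof.
  exists (ppr1 S T), (ppr2 S T). split.
  - exists (fun p => p). split; intros [a b]; reflexivity.
  - exists (fun p => p). split; intros [a b]; reflexivity.
Qed.

Lemma triv_trivial : is_trivial triv.
Proof. split; exists tt; intros []; reflexivity. Qed.

Lemma inl_inj {X Y : Type} (a b : X) : @inl X Y a = inl b -> a = b.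
Proof.
  intro H. change a with (match @inl X Y a with inl z => z | inr _ => a end).
  rewrite H. reflexivity.
Qed.


Lemma pick_gen (T Y : Type) (U : (T -> Prop) -> Prop) :
  (exists X, U X) ->
  (forall X Y, U X -> U Y -> U (fun j => X j /\ Y j)) ->
  (forall X Y : T -> Prop, (forall j, X j -> Y j) -> U X -> U Y) ->
  (forall X, U X -> exists j, X j) ->
  (forall X, U X \/ U (fun j => ~ X j)) ->
  forall (f : T -> Y) (l : list Y), (forall y, In y l) -> exists y, U (fun j => f j = y).
Proof.
  intros [X0 HX0] Hi Hs Hne Hu f l Hl. apply NNPP. intro Hn.
  assert (Hc : forall y, U (fun j => f j <> y)).
  { intro y0. destruct (Hu (fun j => f j = y0)) as [H|H]; [exfalso; eauto|exact H]. }
  assert (Hall : forall l', U (fun j => forall y, In y l' -> f j <> y)).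
  { induction l' as [|a l' IH].
    - apply Hs with X0; [intros j _ y0 []|exact HX0].
    - apply Hs with (fun j => f j <> a /\ (forall y, In y l' -> f j <> y)).
      + intros j [H1 H2] y0 [<-|H]; auto.
      + apply Hi; auto. }
  destruct (Hne _ (Hall l)) as [j Hj]. apply (Hj (f j)); auto.
Qed.
Module UF.
From mathcomp Require Import all_boot classical_sets boolp filter.
Lemma ultra_ex (T : Type) (B : (T -> Prop) -> Prop) :
  (exists X, B X) ->
  (forall X, B X -> exists x, X x) ->
  (forall X Y, B X -> B Y -> exists Z, B Z /\ forall x, Z x -> X x /\ Y x) ->
  exists U : (T -> Prop) -> Prop,
    (forall X, B X -> U X) /\
    (forall X Y, U X -> U Y -> U (fun x => X x /\ Y x)) /\
    (forall X Y : T -> Prop, (forall x, X x -> Y x) -> U X -> U Y) /\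
    (forall X, U X -> exists x, X x) /\
    (forall X, U X \/ U (fun x => ~ X x)).
Proof.
move=> [X0 BX0] Bne Bdir.
pose F : set_system T := fun X => exists Z, B Z /\ forall x, Z x -> X x.
have FF : ProperFilter F.
  apply: Build_ProperFilter_ex.
    move=> X [Z [BZ ZX]]; have [x Zx] := Bne Z BZ; by exists x; apply: ZX.
  split.
  - by exists X0; split.
  - move=> X Y [Z1 [B1 H1]] [Z2 [B2 H2]].
    have [Z [BZ HZ]] := Bdir _ _ B1 B2.
    exists Z; split => // x Zx; have [a b] := HZ x Zx; split; [exact: H1|exact: H2].
  - move=> X Y XY [Z [BZ HZ]]; exists Z; split => // x Zx; exact/XY/HZ.
have [G [GU FG]] := ultraFilterLemma FF.
exists G; split; first by move=> X BX; apply: FG; exists X.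
split; first by move=> X Y GX GY; exact: (filterI GX GY).
split; first by move=> X Y XY GX; exact: (filterS XY GX).
split; first by move=> X GX; have := filter_ex GX; case=> x Xx; exists x.
move=> X; exact: (in_ultra_setVsetC X GU).
Qed.
End UF.
Section Sub.
Variable A : graph.

Inductive Gen (S : sgd) (phi : gmor A S) : sE S -> Prop :=
| gen_base : forall a, Gen S phi (fe phi a)
| gen_mul : forall s t h, Gen S phi s -> Gen S phi t -> Gen S phi (smul S s t h).

Definition subS (S : sgd) (phi : gmor A S) : sgd.
Proof.
  refine (Sgd (sV S) {e : sE S | Gen S phi e}
    (fun e => salpha S (proj1_sig e)) (fun e => somega S (proj1_sig e))
    (fun s t h => exist _ (smul S (proj1_sig s) (proj1_sig t) h)
                   (gen_mul S phi _ _ h (proj2_sig s) (proj2_sig t))) _ _ _).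
  - intros; simpl. apply smul_alpha.
  - intros; simpl. apply smul_omega.
  - intros; apply sig_ext; simpl. apply smul_assoc.
Defined.

Definition incl (S : sgd) (phi : gmor A S) : smor (subS S phi) S.
Proof.
  refine (Smor (subS S phi) S (fun v => v) (@proj1_sig _ _) (fun _ => eq_refl) (fun _ => eq_refl) _).
  intros. simpl. apply smul_pi.
Defined.

Definition phi' (S : sgd) (phi : gmor A S) : gmor A (subS S phi).
Proof.
  refine (Gmor A (subS S phi) (fv phi) (fun a => exist _ (fe phi a) (gen_base S phi a)) _ _).
  - intro a; simpl. apply fe_alpha.
  - intro a; simpl. apply fe_omega.
Defined.

Fixpoint filt (S : sgd) (phi : gmor A S) (l : list (sE S)) : list {e | Gen S phi e} :=
  match l with
  | nil => nil
  | e :: l' => match excluded_middle_informative (Gen S phi e) with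
               | left H => exist _ e H :: filt S phi l'
               | right _ => filt S phi l'
               end
  end.

Lemma filt_in S phi l (x : {e | Gen S phi e}) : In (proj1_sig x) l -> In x (filt S phi l).
Proof.
  induction l as [|e l IH]; simpl; [tauto|].
  intros [He|Hl].
  - destruct (excluded_middle_informative (Gen S phi e)) as [H|H].
    + left. apply sig_ext. simpl. auto.
    + exfalso. apply H. subst. apply (proj2_sig x).
  - destruct (excluded_middle_informative (Gen S phi e)); [right|]; auto.
Qed.

Lemma subS_finite S phi : finite_sgd S -> finite_sgd (subS S phi).
Proof.
  intros [[lv Hv] [le He]]. split.
  - exists lv. exact Hv.
  - exists (filt S phi le). intro x. apply filt_in. apply He.
Qed.

Lemma subS_divides S phi : divides (subS S phi) S.
Proof.
  exists (fun v w => v = w), (fun s t => proj1_sig s = t).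
  split; [split; [|split; [|split]]|split].
  - intro v. exists v. reflexivity.
  - intros s u' w' H1 H2. exists (proj1_sig s). simpl in *. auto.
  - intros s t H. subst. simpl. auto.
  - intros s s' t t' h h' H1 H2. subst. simpl. apply smul_pi.
  - intros v v' w H1 H2. congruence.
  - intros s s' t _ _ H1 H2. apply sig_ext. congruence.
Qed.

Definition gpre {P T : sgd} (f : gmor A P) (chi : gmor (gr P) T) : gmor A T.
Proof.
  refine (Gmor A T (fun a => fv chi (fv f a)) (fun a => fe chi (fe f a)) _ _).
  - intro a. rewrite (fe_alpha chi). simpl. rewrite (fe_alpha f). reflexivity.
  - intro a. rewrite (fe_omega chi). simpl. rewrite (fe_omega f). reflexivity.
Defined.

Variable V : sgd -> Prop.

Definition pushE {P : sgd} (f : gmor A P) (x : OmE V A) : OmE V (gr P).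
Proof.
  refine (MkOmE V (gr P) (fun T HT chi => oe V A x HT (gpre f chi)) _).
  intros S HS T HT chi psi. rewrite (oe_nat V A x S HS T HT).
  f_equal. apply gmor_ext; reflexivity.
Defined.

Lemma push_alpha {P : sgd} (f : gmor A P) (u v : OmE V A) :
  Oalpha V A u = Oomega V A v -> Oalpha V (gr P) (pushE f u) = Oomega V (gr P) (pushE f v).
Proof.
  intro h. apply OmV_ext. intros T HT chi. simpl.
  exact (f_equal (fun o => ov V A o HT (gpre f chi)) h).
Qed.

Lemma push_mul {P : sgd} (f : gmor A P) (u v : OmE V A) h h' :
  pushE f (Omul V A u v h) = Omul V (gr P) (pushE f u) (pushE f v) h'.
Proof.
  apply OmE_ext. intros T HT chi. simpl. apply smul_pi.
Qed.

End Sub.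
Section Main.
Variable V : sgd -> Prop.
Hypothesis HV : pseudovariety V.
Hypothesis HEq : pv_equidivisible V.
Variable A : graph.

Record Idx := mkIdx { iS : sgd; iH : V iS; iphi : gmor A iS }.

Definition agree (j i : Idx) (psi : smor (iS j) (iS i)) : Prop :=
  (forall a, mv psi (fv (iphi j) a) = fv (iphi i) a) /\
  (forall a, me psi (fe (iphi j) a) = fe (iphi i) a).

Lemma agree_gen j i psi1 psi2 : agree j i psi1 -> agree j i psi2 ->
  forall e, Gen A (iS j) (iphi j) e -> me psi1 e = me psi2 e.
Proof.
  intros [_ H1] [_ H2] e He. induction He as [a|s t h Hs IHs Ht IHt].
  - rewrite H1, H2. reflexivity.
  - assert (k1 : salpha _ (me psi1 s) = somega _ (me psi1 t))
      by (rewrite me_alpha, me_omega, h; reflexivity).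
    assert (k2 : salpha _ (me psi2 s) = somega _ (me psi2 t))
      by (rewrite me_alpha, me_omega, h; reflexivity).
    rewrite (me_mul psi1 s t h k1), (me_mul psi2 s t h k2).
    apply smul_congr; auto.
Qed.

Lemma agree_comp j k i psi chi : agree j k psi -> agree k i chi -> agree j i (scomp chi psi).
Proof.
  intros [Hv1 He1] [Hv2 He2]. split; intro a; simpl.
  - rewrite Hv1. apply Hv2.
  - rewrite He1. apply He2.
Qed.

Lemma V_fin S : V S -> finite_sgd S.
Proof. destruct HV as [H _]. apply H. Qed.

Lemma V_sub S phi : V S -> V (subS A S phi).
Proof.
  intro HS. destruct HV as [Hf [Hd _]]. apply (Hd _ S HS).
  - apply subS_finite. apply Hf. exact HS.
  - apply subS_divides.
Qed.

Lemma V_prod S T : V S -> V T -> V (psgd S T).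
Proof.
  intros HS HT. destruct HV as [_ [_ [_ [Hp _]]]]. apply (Hp _ S T HS HT). apply psgd_product.
Qed.

Lemma V_triv : V triv.
Proof. destruct HV as [_ [_ [Ht _]]]. apply Ht. apply triv_trivial. Qed.

Definition gtriv : gmor A triv :=
  Gmor A triv (fun _ => tt) (fun _ => tt) (fun _ => eq_refl) (fun _ => eq_refl).

Definition gpair {S T : sgd} (f : gmor A S) (g : gmor A T) : gmor A (psgd S T).
Proof.
  refine (Gmor A (psgd S T) (fun a => (fv f a, fv g a)) (fun a => (fe f a, fe g a)) _ _).
  - intro a; simpl. rewrite !fe_alpha. reflexivity.
  - intro a; simpl. rewrite !fe_omega. reflexivity.
Defined.

Definition kidx (i1 i2 : Idx) : Idx :=
  mkIdx (psgd (iS i1) (iS i2)) (V_prod _ _ (iH i1) (iH i2)) (gpair (iphi i1) (iphi i2)).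

Lemma agree_pr1 i1 i2 : agree (kidx i1 i2) i1 (ppr1 _ _).
Proof. split; intro a; reflexivity. Qed.
Lemma agree_pr2 i1 i2 : agree (kidx i1 i2) i2 (ppr2 _ _).
Proof. split; intro a; reflexivity. Qed.
Lemma agree_id i : agree i i (sid _).
Proof. split; intro a; reflexivity. Qed.

Definition Up (i j : Idx) : Prop := exists psi, agree j i psi.

Variables u v x y : OmE V A.
Variable h1 : Oalpha V A u = Oomega V A v.
Variable h2 : Oalpha V A x = Oomega V A y.
Hypothesis heq : Omul V A u v h1 = Omul V A x y h2.

Definition Pj (j : Idx) : sgd := subS A (iS j) (iphi j).
Definition HPj (j : Idx) : V (Pj j) := V_sub _ _ (iH j).
Definition fj (j : Idx) : gmor A (Pj j) := phi' A (iS j) (iphi j).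
Definition Zj (z : OmE V A) (j : Idx) : sE (Pj j) :=
  oe V (gr (Pj j)) (pushE A V (fj j) z) (HPj j) (idg (Pj j)).

Lemma Zj_transfer z j i psi : agree j i psi ->
  me psi (proj1_sig (Zj z j)) = oe V A z (iH i) (iphi i).
Proof.
  intros [Hv He].
  transitivity (me (scomp psi (incl A (iS j) (iphi j)))
     (oe V A z (HPj j) (gpre A (fj j) (idg (Pj j))))); [reflexivity|].
  rewrite (oe_nat V A z _ _ _ (iH i)). f_equal.
  apply gmor_ext; intro a; simpl; auto.
Qed.


Inductive case := CL | CR | CVt.

Definition spec (j : Idx) (c : case) (E : sE (Pj j)) : Prop :=
  match c with
  | CL => (exists hA, smul (Pj j) (Zj u j) E hA = Zj x j) /\
          (exists hB, smul (Pj j) E (Zj y j) hB = Zj v j)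
  | CR => (exists hA, smul (Pj j) (Zj x j) E hA = Zj u j) /\
          (exists hB, smul (Pj j) E (Zj v j) hB = Zj y j)
  | CVt => Zj x j = Zj u j /\ Zj v j = Zj y j
  end.

Lemma spec_ex j : exists cE : case * sE (Pj j), spec j (fst cE) (snd cE).
Proof.
  assert (HF : finite_graph (gr (Pj j))).
  { destruct (V_fin _ (HPj j)) as [H1 H2]. split; assumption. }
  pose proof (push_alpha A V (fj j) u v h1) as h1'.
  pose proof (push_alpha A V (fj j) x y h2) as h2'.
  assert (heq' : Omul V (gr (Pj j)) (pushE A V (fj j) u) (pushE A V (fj j) v) h1' =
                 Omul V (gr (Pj j)) (pushE A V (fj j) x) (pushE A V (fj j) y) h2').
  { rewrite <- (push_mul A V (fj j) u v h1 h1'), <- (push_mul A V (fj j) x y h2 h2').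
    rewrite heq. reflexivity. }
  destruct (HEq (gr (Pj j)) HF _ _ _ _ h1' h2' heq') as [t [[H1 H2]|[H1 H2]]];
    destruct t as [e|w]; simpl in H1, H2.
  - destruct H1 as [k1 H1]. destruct H2 as [k2 H2].
    apply inl_inj in H1. apply inl_inj in H2.
    exists (CL, oe V _ e (HPj j) (idg (Pj j))). simpl. split.
    + exists (f_equal (fun o => ov V _ o (HPj j) (idg (Pj j))) k1).
      unfold Zj. rewrite H1. apply sig_ext. simpl. apply smul_pi.
    + exists (f_equal (fun o => ov V _ o (HPj j) (idg (Pj j))) k2).
      unfold Zj. rewrite H2. apply sig_ext. simpl. apply smul_pi.
  - destruct H1 as [_ H1]. destruct H2 as [_ H2].
    apply inl_inj in H1. apply inl_inj in H2.
    exists (CVt, Zj u j). simpl. unfold Zj. rewrite H1, H2. split; reflexivity.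
  - destruct H1 as [k1 H1]. destruct H2 as [k2 H2].
    apply inl_inj in H1. apply inl_inj in H2.
    exists (CR, oe V _ e (HPj j) (idg (Pj j))). simpl. split.
    + exists (f_equal (fun o => ov V _ o (HPj j) (idg (Pj j))) k1).
      unfold Zj. rewrite H1. apply sig_ext. simpl. apply smul_pi.
    + exists (f_equal (fun o => ov V _ o (HPj j) (idg (Pj j))) k2).
      unfold Zj. rewrite H2. apply sig_ext. simpl. apply smul_pi.
  - destruct H1 as [_ H1]. destruct H2 as [_ H2].
    apply inl_inj in H1. apply inl_inj in H2.
    exists (CVt, Zj u j). simpl. unfold Zj. rewrite H1, H2. split; reflexivity.
Qed.

Definition cE (j : Idx) : case * sE (Pj j) :=
  proj1_sig (constructive_indefinite_description _ (spec_ex j)).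

Lemma cE_spec j : spec j (fst (cE j)) (snd (cE j)).
Proof. unfold cE. apply (proj2_sig (constructive_indefinite_description _ (spec_ex j))). Qed.

Definition sval (j i : Idx) : sE (iS i) :=
  match excluded_middle_informative (Up i j) with
  | left H => me (proj1_sig (constructive_indefinite_description _ H)) (proj1_sig (snd (cE j)))
  | right _ => oe V A u (iH i) (iphi i)
  end.

Lemma sval_eq j i psi : agree j i psi -> sval j i = me psi (proj1_sig (snd (cE j))).
Proof.
  intro Ha. unfold sval.
  destruct (excluded_middle_informative (Up i j)) as [H|H]; [|exfalso; apply H; exists psi; exact Ha].
  destruct (constructive_indefinite_description _ H) as [psi0 H0]; simpl.
  apply (agree_gen j i psi0 psi H0 Ha). apply proj2_sig.
Qed.


Lemma proj_mul j (a b : sE (Pj j)) h :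
  proj1_sig (smul (Pj j) a b h) = smul (iS j) (proj1_sig a) (proj1_sig b) h.
Proof. reflexivity. Qed.

Lemma tr_mul_r j i psi (za zc : OmE V A) (E : sE (Pj j)) : agree j i psi ->
  (exists hA, smul (Pj j) (Zj za j) E hA = Zj zc j) ->
  exists k, smul (iS i) (oe V A za (iH i) (iphi i)) (me psi (proj1_sig E)) k
            = oe V A zc (iH i) (iphi i).
Proof.
  intros Ha [hA EA].
  assert (k' : salpha (iS i) (me psi (proj1_sig (Zj za j))) = somega (iS i) (me psi (proj1_sig E))).
  { rewrite me_alpha, me_omega. f_equal. exact hA. }
  assert (k : salpha (iS i) (oe V A za (iH i) (iphi i)) = somega (iS i) (me psi (proj1_sig E))).
  { rewrite <- (Zj_transfer za j i psi Ha). exact k'. }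
  exists k. symmetry.
  rewrite <- (Zj_transfer zc j i psi Ha), <- EA, proj_mul, (me_mul psi _ _ hA k').
  apply smul_congr; [apply Zj_transfer; exact Ha | reflexivity].
Qed.

Lemma tr_mul_l j i psi (za zc : OmE V A) (E : sE (Pj j)) : agree j i psi ->
  (exists hA, smul (Pj j) E (Zj za j) hA = Zj zc j) ->
  exists k, smul (iS i) (me psi (proj1_sig E)) (oe V A za (iH i) (iphi i)) k
            = oe V A zc (iH i) (iphi i).
Proof.
  intros Ha [hA EA].
  assert (k' : salpha (iS i) (me psi (proj1_sig E)) = somega (iS i) (me psi (proj1_sig (Zj za j)))).
  { rewrite me_alpha, me_omega. f_equal. exact hA. }
  assert (k : salpha (iS i) (me psi (proj1_sig E)) = somega (iS i) (oe V A za (iH i) (iphi i))).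
  { rewrite <- (Zj_transfer za j i psi Ha). exact k'. }
  exists k. symmetry.
  rewrite <- (Zj_transfer zc j i psi Ha), <- EA, proj_mul, (me_mul psi _ _ hA k').
  apply smul_congr; [reflexivity | apply Zj_transfer; exact Ha].
Qed.

Lemma tr_eq j i psi (za zb : OmE V A) : agree j i psi -> Zj za j = Zj zb j ->
  oe V A za (iH i) (iphi i) = oe V A zb (iH i) (iphi i).
Proof.
  intros Ha E. rewrite <- (Zj_transfer za j i psi Ha), <- (Zj_transfer zb j i psi Ha), E.
  reflexivity.
Qed.

Definition i0 : Idx := mkIdx triv V_triv gtriv.

Lemma ultra : exists U : (Idx -> Prop) -> Prop,
  (forall i, U (Up i)) /\
  (forall X Y, U X -> U Y -> U (fun j => X j /\ Y j)) /\
  (forall X Y : Idx -> Prop, (forall j, X j -> Y j) -> U X -> U Y) /\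
  (forall X, U X -> exists j, X j) /\
  (forall X, U X \/ U (fun j => ~ X j)).
Proof.
  destruct (UF.ultra_ex Idx (fun X => exists i, X = Up i)) as [U HU].
  - exists (Up i0), i0. reflexivity.
  - intros X [i ->]. exists i. exists (sid _). apply agree_id.
  - intros X Y [i1 ->] [i2 ->]. exists (Up (kidx i1 i2)). split.
    + exists (kidx i1 i2). reflexivity.
    + intros j [psi Hpsi]. split.
      * exists (scomp (ppr1 _ _) psi). apply (agree_comp j (kidx i1 i2) i1); auto. apply agree_pr1.
      * exists (scomp (ppr2 _ _) psi). apply (agree_comp j (kidx i1 i2) i2); auto. apply agree_pr2.
  - exists U. destruct HU as (Hb & Hi & Hs & Hne & Hu). repeat split; auto.
    intro i. apply Hb. exists i. reflexivity.
Qed.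

Lemma main_equi :
  exists t : OmE V A + OmV V A,
    (prodI (OmV V A) (OmE V A) (Oalpha V A) (Oomega V A) (Omul V A) (inl u) t (inl x) /\
     prodI (OmV V A) (OmE V A) (Oalpha V A) (Oomega V A) (Omul V A) t (inl y) (inl v)) \/
    (prodI (OmV V A) (OmE V A) (Oalpha V A) (Oomega V A) (Omul V A) (inl x) t (inl u) /\
     prodI (OmV V A) (OmE V A) (Oalpha V A) (Oomega V A) (Omul V A) t (inl v) (inl y)).
Proof.
  destruct ultra as [U (Hup & Hi & Hs & Hne & Hu)].
  assert (pick : forall (Y : Type) (f : Idx -> Y) (l : list Y), (forall y, In y l) -> exists y, U (fun j => f j = y)).
  { intros Y f l Hl. exact (pick_gen Idx Y U (ex_intro _ _ (Hup i0)) Hi Hs Hne Hu f l Hl). }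
  assert (coord_ex : forall i, exists s, U (fun j => sval j i = s)).
  { intro i. destruct (V_fin _ (iH i)) as [_ [l Hl]]. apply (pick _ (fun j => sval j i) l Hl). }
  pose (sfin := fun i => proj1_sig (constructive_indefinite_description _ (coord_ex i))).
  assert (Hsfin : forall i, U (fun j => sval j i = sfin i)).
  { intro i. unfold sfin. apply (proj2_sig (constructive_indefinite_description _ (coord_ex i))). }
  assert (get : forall i P, U P -> exists j psi, agree j i psi /\ P j /\ sval j i = sfin i).
  { intros i P HP. destruct (Hne _ (Hi _ _ (Hup i) (Hi _ _ HP (Hsfin i)))) as [j [[psi Hpsi] [H1 H2]]].
    exists j, psi. auto. }
  assert (Hnat : forall (S : sgd) (HS : V S) (T : sgd) (HT : V T) (phi : gmor A S) (psi : smor S T),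
             me psi (sfin (mkIdx S HS phi)) = sfin (mkIdx T HT (gcomp psi phi))).
  { intros S HS T HT phi psi.
    set (i := mkIdx S HS phi). set (k := mkIdx T HT (gcomp psi phi)).
    destruct (get i _ (Hsfin k)) as [j [psij [Ha [E1 E2]]]].
    assert (Hik : agree i k psi) by (split; intro a; reflexivity).
    pose proof (agree_comp j i k psij psi Ha Hik) as Hjk.
    rewrite <- E1, <- E2, (sval_eq j k _ Hjk), (sval_eq j i _ Ha). reflexivity. }
  pose (tE := MkOmE V A (fun S HS phi => sfin (mkIdx S HS phi)) Hnat).
  destruct (pick _ (fun j => fst (cE j)) (CL :: CR :: CVt :: nil)) as [c Hc].
  { intros [| |]; simpl; auto. }
  destruct c.
  -
    assert (PL : forall i, (exists k, smul (iS i) (oe V A u (iH i) (iphi i)) (sfin i) k = oe V A x (iH i) (iphi i))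
                        /\ (exists k, smul (iS i) (sfin i) (oe V A y (iH i) (iphi i)) k = oe V A v (iH i) (iphi i))).
    { intro i. destruct (get i _ Hc) as [j [psi [Ha [Hcj Hsv]]]].
      pose proof (cE_spec j) as Hsp. rewrite Hcj in Hsp. simpl in Hsp. destruct Hsp as [S1 S2].
      rewrite <- Hsv, (sval_eq j i psi Ha). split.
      - apply tr_mul_r; auto.
      - apply tr_mul_l; auto. }
    assert (h : Oalpha V A u = Oomega V A tE).
    { apply OmV_ext. intros S HS phi. destruct (PL (mkIdx S HS phi)) as [[k _] _]. exact k. }
    assert (h' : Oalpha V A tE = Oomega V A y).
    { apply OmV_ext. intros S HS phi. destruct (PL (mkIdx S HS phi)) as [_ [k _]]. exact k. }
    exists (inl tE). left. split.
    + exists h. f_equal. apply OmE_ext. intros S HS phi.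
      destruct (PL (mkIdx S HS phi)) as [[k Hk] _].
      etransitivity; [symmetry; exact Hk|]. apply smul_pi.
    + exists h'. f_equal. apply OmE_ext. intros S HS phi.
      destruct (PL (mkIdx S HS phi)) as [_ [k Hk]].
      etransitivity; [symmetry; exact Hk|]. apply smul_pi.
  -
    assert (PR : forall i, (exists k, smul (iS i) (oe V A x (iH i) (iphi i)) (sfin i) k = oe V A u (iH i) (iphi i))
                        /\ (exists k, smul (iS i) (sfin i) (oe V A v (iH i) (iphi i)) k = oe V A y (iH i) (iphi i))).
    { intro i. destruct (get i _ Hc) as [j [psi [Ha [Hcj Hsv]]]].
      pose proof (cE_spec j) as Hsp. rewrite Hcj in Hsp. simpl in Hsp. destruct Hsp as [S1 S2].
      rewrite <- Hsv, (sval_eq j i psi Ha). split.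
      - apply tr_mul_r; auto.
      - apply tr_mul_l; auto. }
    assert (h : Oalpha V A x = Oomega V A tE).
    { apply OmV_ext. intros S HS phi. destruct (PR (mkIdx S HS phi)) as [[k _] _]. exact k. }
    assert (h' : Oalpha V A tE = Oomega V A v).
    { apply OmV_ext. intros S HS phi. destruct (PR (mkIdx S HS phi)) as [_ [k _]]. exact k. }
    exists (inl tE). right. split.
    + exists h. f_equal. apply OmE_ext. intros S HS phi.
      destruct (PR (mkIdx S HS phi)) as [[k Hk] _].
      etransitivity; [symmetry; exact Hk|]. apply smul_pi.
    + exists h'. f_equal. apply OmE_ext. intros S HS phi.
      destruct (PR (mkIdx S HS phi)) as [_ [k Hk]].
      etransitivity; [symmetry; exact Hk|]. apply smul_pi.
  -
    assert (PV : forall i, oe V A x (iH i) (iphi i) = oe V A u (iH i) (iphi i)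
                        /\ oe V A v (iH i) (iphi i) = oe V A y (iH i) (iphi i)).
    { intro i. destruct (get i _ Hc) as [j [psi [Ha [Hcj _]]]].
      pose proof (cE_spec j) as Hsp. rewrite Hcj in Hsp. simpl in Hsp. destruct Hsp as [S1 S2].
      split; eapply tr_eq; eauto. }
    assert (Ex : x = u).
    { apply OmE_ext. intros S HS phi. apply (PV (mkIdx S HS phi)). }
    assert (Ev : v = y).
    { apply OmE_ext. intros S HS phi. apply (PV (mkIdx S HS phi)). }
    exists (inr (Oalpha V A u)). left. simpl. split.
    + split; [reflexivity|]. rewrite Ex. reflexivity.
    + split; [|rewrite Ev; reflexivity].
      rewrite <- Ev. symmetry. exact h1.
Qed.

End Main.

Theorem mainTheorem9 (V : sgd -> Prop) :
  pseudovariety V ->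
  (pv_equidivisible V <->
   (forall A : graph, finite_vertex_graph A -> free_proV_equidivisible V A)).
Proof.
  intro HV. split.
  - intros HEq A _ u v x y h1 h2 heq. exact (main_equi V HV HEq A u v x y h1 h2 heq).
  - intros H A [HAv _]. apply H. exact HAv.
Qed.
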